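(* Let $E$ be a Fréchet space, let $E^*$ be its topological dual (the space of continuous linear functionals $E\to\mathbb{R}$) endowed with the weak$^*$ topology, let $[a,b]\subset\mathbb{R}$ be a compact interval and let $f:[a,b]\to E^*$ be continuous. Then the closed convex hull $\overline{\mathrm{co}}(f([a,b]))$ is compact in $E^*$.
   Context: The closed convex hull $\overline{\mathrm{co}}(K)$ of a subset $K$ of a topological vector space is the closure of the set of all finite convex combinations of elements of $K$. *)

(* Defs.v *)
From Stdlib Require Import Reals Lra List.
Open Scope R_scope.

Record RVectorSpace := {
  vcar :> Type;
  vadd : vcar -> vcar -> vcar;
  vscal : R -> vcar -> vcar;
  vzero : vcar;
  vopp : vcar -> vcar;
  vadd_assoc : forall x y z, vadd x (vadd y z) = vadd (vadd x y) z;
  vadd_comm : forall x y, vadd x y = vadd y x;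
  vadd_0 : forall x, vadd x vzero = x;
  vadd_opp : forall x, vadd x (vopp x) = vzero;
  vscal_1 : forall x, vscal 1 x = x;
  vscal_assoc : forall a b x, vscal a (vscal b x) = vscal (a * b) x;
  vscal_distr_r : forall a x y, vscal a (vadd x y) = vadd (vscal a x) (vscal a y);
  vscal_distr_l : forall a b x, vscal (a + b) x = vadd (vscal a x) (vscal b x)
}.

Definition vsub {E : RVectorSpace} (x y : E) : E := vadd E x (vopp E y).

Record Frechet := {
  fvs :> RVectorSpace;
  snorm : nat -> fvs -> R;
  snorm_nonneg : forall n x, 0 <= snorm n x;
  snorm_triangle : forall n x y, snorm n (vadd fvs x y) <= snorm n x + snorm n y;
  snorm_homog : forall n c x, snorm n (vscal fvs c x) = Rabs c * snorm n x;
  snorm_sep : forall x, (forall n, snorm n x = 0) -> x = vzero fvs;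
  frechet_complete : forall u : nat -> fvs,
    (forall n eps, eps > 0 -> exists N, forall i j, (i >= N)%nat -> (j >= N)%nat ->
        snorm n (vsub (u i) (u j)) < eps) ->
    exists l : fvs, forall n eps, eps > 0 -> exists N, forall i, (i >= N)%nat ->
        snorm n (vsub (u i) l) < eps
}.

Definition is_linear {E : RVectorSpace} (phi : E -> R) : Prop :=
  (forall x y, phi (vadd E x y) = phi x + phi y) /\
  (forall c x, phi (vscal E c x) = c * phi x).

(** Continuity for the locally convex topology generated by the seminorms:
    basic neighbourhoods of x are finite intersections of seminorm balls,
    i.e. sets {y | forall k <= n, snorm k (y - x) < delta}. *)
Definition is_continuous_functional {E : Frechet} (phi : E -> R) : Prop :=
  forall (x : E) eps, eps > 0 -> exists (n : nat) (delta : R), delta > 0 /\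
    forall y : E, (forall k, (k <= n)%nat -> snorm E k (vsub y x) < delta) ->
      Rabs (phi y - phi x) < eps.

Definition in_dual {E : Frechet} (phi : E -> R) : Prop :=
  is_linear phi /\ is_continuous_functional phi.

(** Weak-* open sets: U is open iff around each of its points phi it contains a
    basic neighbourhood {psi | forall x in xs, |psi x - phi x| < eps}.
    (Open sets of E^* are the traces on E^* of these sets.) *)
Definition wopen {E : Frechet} (U : (E -> R) -> Prop) : Prop :=
  forall phi, U phi -> exists (xs : list E) (eps : R), eps > 0 /\
    forall psi, (forall x, In x xs -> Rabs (psi x - phi x) < eps) -> U psi.

Definition wstar_compact {E : Frechet} (K : (E -> R) -> Prop) : Prop :=
  (forall phi, K phi -> in_dual phi) /\
  forall (I : Type) (U : I -> (E -> R) -> Prop),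
    (forall i, wopen (U i)) ->
    (forall phi, K phi -> exists i, U i phi) ->
    exists l : list I, forall phi, K phi -> exists i, In i l /\ U i phi.

Definition comb {E : Frechet} (l : list (R * (E -> R))) : E -> R :=
  fun x => fold_right (fun p acc => fst p * snd p x + acc) 0 l.

Definition convex_hull {E : Frechet} (K : (E -> R) -> Prop) : (E -> R) -> Prop :=
  fun phi => exists l : list (R * (E -> R)),
    (forall p, In p l -> 0 <= fst p /\ K (snd p)) /\
    fold_right (fun p acc => fst p + acc) 0 l = 1 /\
    phi = comb l.

Definition wstar_closure {E : Frechet} (A : (E -> R) -> Prop) : (E -> R) -> Prop :=
  fun phi => in_dual phi /\
    forall U, wopen U -> U phi -> exists psi, A psi /\ U psi.

Definition closed_convex_hull {E : Frechet} (K : (E -> R) -> Prop) :=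
  wstar_closure (convex_hull K).

Definition wstar_continuous_on (E : Frechet) (a b : R) (f : R -> E -> R) : Prop :=
  (forall t, a <= t <= b -> in_dual (f t)) /\
  forall t, a <= t <= b -> forall U : (E -> R) -> Prop, wopen U -> U (f t) ->
    exists delta, delta > 0 /\
      forall s, a <= s <= b -> Rabs (s - t) < delta -> U (f s).

Definition image_interval {E : Frechet} (f : R -> E -> R) (a b : R) : (E -> R) -> Prop :=
  fun phi => exists t, a <= t <= b /\ phi = f t.

(* Main.v *)
Require Import Defs.
From Stdlib Require Import Reals List Lra Lia Classical ClassicalEpsilon.
Open Scope R_scope.

Lemma vadd_0_l (E : RVectorSpace) (x : E) : vadd E (vzero E) x = x.
Proof. rewrite vadd_comm; apply vadd_0. Qed.

Lemma vadd_cancel (E : RVectorSpace) (u v : E) : vadd E u v = u -> v = vzero E.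
Proof.
  intro H.
  assert (H2 : vadd E (vopp E u) (vadd E u v) = vadd E (vopp E u) u) by (rewrite H; reflexivity).
  rewrite vadd_assoc in H2. rewrite (vadd_comm E (vopp E u) u), vadd_opp, vadd_0_l in H2.
  exact H2.
Qed.

Lemma vscal_0 (E : RVectorSpace) (x : E) : vscal E 0 x = vzero E.
Proof.
  apply (vadd_cancel E (vscal E 0 x)).
  rewrite <- vscal_distr_l. f_equal. ring.
Qed.

Lemma vopp_unique (E : RVectorSpace) (x w : E) : vadd E x w = vzero E -> w = vopp E x.
Proof.
  intro H.
  rewrite <- (vadd_0 E w), <- (vadd_opp E x), vadd_assoc, (vadd_comm E w x), H, vadd_0_l.
  reflexivity.
Qed.

Lemma vopp_scal (E : RVectorSpace) (x : E) : vopp E x = vscal E (-1) x.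
Proof.
  symmetry; apply vopp_unique.
  rewrite <- (vscal_1 E x) at 1. rewrite <- vscal_distr_l.
  replace (1 + -1) with 0 by ring. apply vscal_0.
Qed.

Lemma vsub_add_l (E : RVectorSpace) (x z : E) : vsub (vadd E x z) x = z.
Proof.
  unfold vsub. rewrite (vadd_comm E x z), <- vadd_assoc, vadd_opp, vadd_0. reflexivity.
Qed.

Lemma vsub_diag (E : RVectorSpace) (x : E) : vsub x x = vzero E.
Proof. unfold vsub. apply vadd_opp. Qed.

Lemma vsub_chain (E : RVectorSpace) (x y z : E) :
  vsub z x = vadd E (vsub z y) (vsub y x).
Proof.
  unfold vsub. rewrite <- vadd_assoc. f_equal.
  rewrite vadd_assoc, (vadd_comm E (vopp E y) y), vadd_opp, vadd_0_l. reflexivity.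
Qed.

Lemma vsub_swap (E : RVectorSpace) (x y : E) : vsub x y = vscal E (-1) (vsub y x).
Proof.
  unfold vsub. rewrite vscal_distr_r, (vopp_scal E x), (vopp_scal E y), vscal_assoc.
  replace (-1 * -1) with 1 by ring. rewrite vscal_1, vadd_comm. reflexivity.
Qed.



Lemma snorm_zero (E : Frechet) n : snorm E n (vzero E) = 0.
Proof.
  rewrite <- (vscal_0 E (vzero E)), snorm_homog, Rabs_R0. ring.
Qed.

Lemma snorm_sub_sym (E : Frechet) n (x y : E) : snorm E n (vsub x y) = snorm E n (vsub y x).
Proof.
  rewrite vsub_swap, snorm_homog. replace (Rabs (-1)) with 1 by (rewrite Rabs_left; lra). ring.
Qed.

Lemma snorm_sub_tri (E : Frechet) n (x y z : E) :
  snorm E n (vsub z x) <= snorm E n (vsub z y) + snorm E n (vsub y x).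
Proof. rewrite (vsub_chain E x y z). apply snorm_triangle. Qed.



Lemma lin_zero (E : RVectorSpace) (phi : E -> R) : is_linear phi -> phi (vzero E) = 0.
Proof.
  intros [_ Hs]. rewrite <- (vscal_0 E (vzero E)), Hs. ring.
Qed.

Lemma lin_sub (E : RVectorSpace) (phi : E -> R) x y : is_linear phi ->
  phi (vsub y x) = phi y - phi x.
Proof.
  intros [Ha Hs]. unfold vsub. rewrite Ha, vopp_scal, Hs. ring.
Qed.

Lemma time_cont (E : Frechet) a b f : wstar_continuous_on E a b f ->
  forall x t, a <= t <= b -> forall eps, eps > 0 -> exists delta, delta > 0 /\
    forall s, a <= s <= b -> Rabs (s - t) < delta -> Rabs (f s x - f t x) < eps.
Proof.
  intros [_ Hc] x t Ht eps He.
  set (U := fun psi : E -> R => Rabs (psi x - f t x) < eps).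
  assert (HU : wopen U).
  { intros psi0 H0. exists (x :: nil), (eps - Rabs (psi0 x - f t x)). split. unfold U in H0; lra.
    intros psi Hpsi. specialize (Hpsi x (in_eq _ _)). unfold U.
    replace (psi x - f t x) with ((psi x - psi0 x) + (psi0 x - f t x)) by ring.
    eapply Rle_lt_trans. apply Rabs_triang. lra. }
  destruct (Hc t Ht U HU) as [delta [Hd Hs]].
  { unfold U. replace (f t x - f t x) with 0 by ring. rewrite Rabs_R0. lra. }
  exists delta. split. exact Hd. intros s Hs1 Hs2. exact (Hs s Hs1 Hs2).
Qed.

Definition clamp (a b s : R) := Rmax a (Rmin b s).

Lemma clamp_in a b s : a <= b -> a <= clamp a b s <= b.
Proof. intro H. unfold clamp, Rmax, Rmin. repeat destruct (Rle_dec _ _); lra. Qed.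

Lemma clamp_id a b s : a <= s <= b -> clamp a b s = s.
Proof. intro H. unfold clamp, Rmax, Rmin. repeat destruct (Rle_dec _ _); lra. Qed.

Lemma clamp_lip a b s t : a <= b -> Rabs (clamp a b s - clamp a b t) <= Rabs (s - t).
Proof.
  intro H. unfold clamp, Rmax, Rmin. repeat destruct (Rle_dec _ _);
  unfold Rabs; repeat destruct (Rcase_abs _); lra.
Qed.

Lemma time_bounded (E : Frechet) a b f : a <= b -> wstar_continuous_on E a b f ->
  forall x, exists m, forall t, a <= t <= b -> Rabs (f t x) <= m.
Proof.
  intros Hab Hc x.
  set (g := fun s => f (clamp a b s) x).
  assert (Hg : forall c, a <= c <= b -> continuity_pt g c).
  { intros c _. unfold continuity_pt, continue_in, limit1_in, limit_in. simpl.
    intros eps He.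
    destruct (time_cont E a b f Hc x (clamp a b c) (clamp_in a b c Hab) eps He) as [d [Hd Hs]].
    exists d. split. exact Hd. intros s [_ Hs2]. unfold R_dist in *. unfold g.
    apply Hs. apply clamp_in; exact Hab.
    eapply Rle_lt_trans. apply clamp_lip; exact Hab. exact Hs2. }
  destruct (continuity_ab_maj g a b Hab Hg) as [M [HM _]].
  destruct (continuity_ab_min g a b Hab Hg) as [m [Hm _]].
  exists (Rmax (g M) (- g m)). intros t Ht.
  specialize (HM t Ht). specialize (Hm t Ht).
  assert (Hgt : g t = f t x) by (unfold g; rewrite (clamp_id a b t Ht); reflexivity).
  rewrite Hgt in HM, Hm. clearbody g.
  unfold Rabs, Rmax. destruct (Rcase_abs _); destruct (Rle_dec _ _); lra.
Qed.

(** * Baire argument *)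
Definition sball (E : Frechet) (x : E) (n : nat) (d : R) (y : E) : Prop :=
  forall k, (k <= n)%nat -> snorm E k (vsub y x) < d.

Definition Pm (E : Frechet) a b (f : R -> E -> R) (m : nat) (y : E) : Prop :=
  forall t, a <= t <= b -> Rabs (f t y) <= INR m.

Lemma not_P_open (E : Frechet) a b f m (y : E) : wstar_continuous_on E a b f ->
  ~ Pm E a b f m y -> exists n d, d > 0 /\ forall z, sball E y n d z -> ~ Pm E a b f m z.
Proof.
  intros [Hd _] HnP.
  destruct (not_all_ex_not _ _ HnP) as [t Ht].
  destruct (imply_to_and _ _ Ht) as [Ht1 Ht2].
  apply Rnot_le_lt in Ht2.
  destruct (Hd t Ht1) as [_ Hcont].
  destruct (Hcont y (Rabs (f t y) - INR m)) as [n [d [Hd0 Hn]]]. lra.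
  exists n, d. split. exact Hd0.
  intros z Hz HP. specialize (Hn z Hz). specialize (HP t Ht1).
  assert (Rabs (f t y) <= Rabs (f t z) + Rabs (f t z - f t y)).
  { replace (f t y) with (f t z - (f t z - f t y)) at 1 by ring.
    eapply Rle_trans. apply Rabs_triang. rewrite Rabs_Ropp. lra. }
  lra.
Qed.

Lemma sball_center (E : Frechet) x n d : d > 0 -> sball E x n d x.
Proof. intros Hd k _. rewrite vsub_diag, snorm_zero. exact Hd. Qed.

Lemma baire_step (E : Frechet) a b f : wstar_continuous_on E a b f ->
  (forall m (x0 : E) n d, d > 0 -> exists y, sball E x0 n d y /\ ~ Pm E a b f m y) ->
  forall j (x : E) n d, d > 0 -> exists x' n' d', 0 < d' /\ d' <= d / 4 /\ (n < n')%nat /\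
    (forall z, sball E x' n' d' z -> forall k, (k <= n)%nat -> snorm E k (vsub z x) <= 3 * d / 4) /\
    (forall z, sball E x' n' d' z -> ~ Pm E a b f j z).
Proof.
  intros Hc H j x n d Hd.
  destruct (H j x n (d / 2)) as [y [Hy HnP]]. lra.
  destruct (not_P_open E a b f j y Hc HnP) as [n'' [d'' [Hd'' Hz]]].
  exists y, (n'' + S n)%nat, (Rmin d'' (d / 4)).
  assert (Hmin1 : Rmin d'' (d/4) <= d'') by apply Rmin_l.
  assert (Hmin2 : Rmin d'' (d/4) <= d/4) by apply Rmin_r.
  assert (Hmin3 : 0 < Rmin d'' (d/4)) by (apply Rmin_glb_lt; lra).
  split. exact Hmin3. split. exact Hmin2. split. lia.
  split.
  - intros z Hzb k Hk.
    assert (h1 : snorm E k (vsub z y) < d / 4) by (eapply Rlt_le_trans; [apply Hzb; lia | exact Hmin2]).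
    assert (h2 := Hy k Hk).
    assert (h3 := snorm_sub_tri E k x y z). lra.
  - intros z Hzb. apply Hz. intros k Hk.
    eapply Rlt_le_trans; [apply Hzb; lia | exact Hmin1].
Qed.

Lemma baire (E : Frechet) a b f : a <= b -> wstar_continuous_on E a b f ->
  exists m (x0 : E) n d, d > 0 /\ forall y, sball E x0 n d y -> Pm E a b f m y.
Proof.
  intros Hab Hc. apply NNPP; intro Hneg.
  assert (H : forall m x0 n d, d > 0 -> exists y, sball E x0 n d y /\ ~ Pm E a b f m y).
  { intros m x0 n d Hd. apply NNPP; intro H1. apply Hneg. exists m, x0, n, d. split. exact Hd.
    intros y Hy. apply NNPP; intro Hp. apply H1. exists y. split; assumption. }
  pose (Q := fun j (s s' : E * nat * R) =>
     let '(x, n, d) := s in let '(x', n', d') := s' in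
     d > 0 -> 0 < d' /\ d' <= d/4 /\ (n < n')%nat /\
       (forall z, sball E x' n' d' z -> forall k, (k<=n)%nat -> snorm E k (vsub z x) <= 3*d/4) /\
       (forall z, sball E x' n' d' z -> ~ Pm E a b f j z)).
  assert (HQ : forall j s, exists s', Q j s s').
  { intros j [[x n] d]. destruct (Rlt_dec 0 d) as [Hd|Hd].
    - destruct (baire_step E a b f Hc H j x n d Hd) as [x' [n' [d' Hs]]].
      exists (x', n', d'). simpl. intros _. exact Hs.
    - exists (x, n, d). simpl. intro; lra. }
  pose (F := fun j s => proj1_sig (constructive_indefinite_description _ (HQ j s))).
  assert (HF : forall j s, Q j s (F j s)) by (intros; unfold F; apply proj2_sig).
  pose (sq := fix sq j := match j with O => (vzero E, O, 1) | Datatypes.S j => F j (sq j) end).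
  assert (HS : forall j, sq (S j) = F j (sq j)) by reflexivity.
  pose (X := fun j => fst (fst (sq j))).
  pose (N := fun j => snd (fst (sq j))).
  pose (D := fun j => snd (sq j)).
  assert (Hstep : forall j, D j > 0 -> 0 < D (S j) /\ D (S j) <= D j / 4 /\ (N j < N (S j))%nat /\
       (forall z, sball E (X (S j)) (N (S j)) (D (S j)) z -> forall k, (k <= N j)%nat ->
          snorm E k (vsub z (X j)) <= 3 * D j / 4) /\
       (forall z, sball E (X (S j)) (N (S j)) (D (S j)) z -> ~ Pm E a b f j z)).
  { intro j. unfold X, N, D. rewrite HS. generalize (HF j (sq j)).
    destruct (sq j) as [[x n] d]. destruct (F j (x, n, d)) as [[x' n'] d']. simpl. auto. }
  assert (HD0 : D 0%nat = 1) by reflexivity.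
  clearbody X N D. clear HS HF F HQ Q sq.
  assert (HD : forall j, D j > 0 /\ D j <= (/4) ^ j /\ (j <= N j)%nat).
  { induction j as [|j [IH1 [IH2 IH3]]].
    - rewrite HD0. simpl. split. lra. split. lra. lia.
    - destruct (Hstep j IH1) as [h1 [h2 [h3 _]]]. split. exact h1. split.
      + simpl. lra.
      + lia. }
  assert (Hnest1 : forall j z, sball E (X (S j)) (N (S j)) (D (S j)) z -> sball E (X j) (N j) (D j) z).
  { intros j z Hz k Hk. destruct (HD j) as [h _]. destruct (Hstep j h) as [_ [_ [_ [h4 _]]]].
    specialize (h4 z Hz k Hk). lra. }
  assert (Hnest : forall J i z, (J <= i)%nat -> sball E (X i) (N i) (D i) z -> sball E (X J) (N J) (D J) z).
  { intros J i z Hi. induction Hi as [|i Hi IH]. auto. intro Hz. apply IH. apply Hnest1. exact Hz. }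
  assert (Hself : forall i, sball E (X i) (N i) (D i) (X i)).
  { intro i. apply sball_center. apply HD. }
  assert (Hcauchy : forall k eps, eps > 0 -> exists Nn, forall i i', (i >= Nn)%nat -> (i' >= Nn)%nat ->
            snorm E k (vsub (X i) (X i')) < eps).
  { intros k eps He.
    destruct (pow_lt_1_zero (/4) ltac:(rewrite Rabs_right; lra) (eps / 2) ltac:(lra)) as [J0 HJ0].
    exists (Nat.max J0 k). intros i i' Hi Hi'.
    set (J := Nat.max J0 k) in *.
    assert (hk : (k <= N J)%nat) by (destruct (HD J) as [_ [_ h]]; lia).
    assert (h1 := Hnest J i (X i) Hi (Hself i) k hk).
    assert (h2 := Hnest J i' (X i') Hi' (Hself i') k hk).
    assert (h3 := snorm_sub_tri E k (X i') (X J) (X i)).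
    rewrite (snorm_sub_sym E k (X J) (X i')) in h3.
    assert (h4 := HJ0 J ltac:(lia)). rewrite Rabs_right in h4 by (apply Rle_ge, pow_le; lra).
    destruct (HD J) as [_ [h5 _]]. lra. }
  destruct (frechet_complete E X Hcauchy) as [l Hl].
  assert (Hlball : forall J, sball E (X J) (N J) (D J) l).
  { intros J k Hk. destruct (HD J) as [hDJ _].
    destruct (Hstep J hDJ) as [_ [_ [_ [h4 _]]]].
    apply Rle_lt_trans with (3 * D J / 4); [|lra].
    apply Rnot_lt_le; intro Hgap.
    destruct (Hl k (snorm E k (vsub l (X J)) - 3 * D J / 4) ltac:(lra)) as [Nl HNl].
    set (i := Nat.max Nl (S J)).
    assert (h1 := HNl i ltac:(unfold i; lia)).
    assert (h2 := h4 (X i) (Hnest (S J) i (X i) ltac:(unfold i; lia) (Hself i)) k Hk).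
    assert (h3 := snorm_sub_tri E k (X J) (X i) l).
    rewrite (snorm_sub_sym E k l (X i)) in h3. lra. }
  destruct (time_bounded E a b f Hab Hc l) as [m Hm].
  destruct (INR_archimed 1 m ltac:(lra)) as [j Hj].
  destruct (HD (S j)) as [_ _].
  destruct (Hstep j ltac:(apply HD)) as [_ [_ [_ [_ h5]]]].
  apply (h5 l (Hlball (S j))).
  intros t Ht. specialize (Hm t Ht). lra.
Qed.

Definition sball0 (E : Frechet) (n : nat) (d : R) (z : E) : Prop :=
  forall k, (k <= n)%nat -> snorm E k z < d.

Lemma ball_bound (E : Frechet) a b f : a <= b -> wstar_continuous_on E a b f ->
  exists C n d, d > 0 /\ C >= 0 /\
    forall t, a <= t <= b -> forall z, sball0 E n d z -> Rabs (f t z) <= C.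
Proof.
  intros Hab Hc. destruct (baire E a b f Hab Hc) as [m [x0 [n [d [Hd Hb]]]]].
  exists (2 * INR m), n, d. split. exact Hd. split. assert (h := pos_INR m). lra.
  intros t Ht z Hz.
  assert (H1 : Pm E a b f m (vadd E x0 z)).
  { apply Hb. intros k Hk. rewrite vsub_add_l. apply Hz; exact Hk. }
  assert (H2 : Pm E a b f m x0) by (apply Hb; apply sball_center; exact Hd).
  specialize (H1 t Ht). specialize (H2 t Ht).
  destruct Hc as [Hdual _]. destruct (Hdual t Ht) as [[Ha _] _].
  rewrite Ha in H1.
  assert (Rabs (f t z) <= Rabs (f t x0 + f t z) + Rabs (f t x0)).
  { replace (f t z) with ((f t x0 + f t z) + - f t x0) at 1 by ring.
    eapply Rle_trans. apply Rabs_triang. rewrite Rabs_Ropp. lra. }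
  lra.
Qed.

Definition W {E : Frechet} (S : (E -> R) -> Prop) (phi : E -> R) : Prop :=
  forall U, wopen U -> U phi -> exists psi, S psi /\ U psi.

Lemma W_abs (E : Frechet) (S : (E -> R) -> Prop) (z : E) C phi :
  (forall psi, S psi -> Rabs (psi z) <= C) -> W S phi -> Rabs (phi z) <= C.
Proof.
  intros HS HW. apply Rnot_lt_le; intro Hgt.
  destruct (HW (fun psi => C < Rabs (psi z))) as [psi [Hp1 Hp2]].
  - intros psi0 H0. exists (z :: nil), (Rabs (psi0 z) - C). split. lra.
    intros psi Hpsi. specialize (Hpsi z (in_eq _ _)).
    assert (Rabs (psi0 z) <= Rabs (psi z) + Rabs (psi z - psi0 z)).
    { replace (psi0 z) with (psi z + - (psi z - psi0 z)) at 1 by ring.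
      eapply Rle_trans. apply Rabs_triang. rewrite Rabs_Ropp. lra. }
    lra.
  - exact Hgt.
  - specialize (HS psi Hp1). lra.
Qed.

Lemma W_lin (E : Frechet) (S : (E -> R) -> Prop) phi :
  (forall psi, S psi -> is_linear psi) -> W S phi -> is_linear phi.
Proof.
  intros HS HW. split.
  - intros x y. apply NNPP; intro Hne.
    destruct (HW (fun psi => psi (vadd E x y) - psi x - psi y <> 0)) as [psi [Hp1 Hp2]].
    + intros psi0 H0. set (g0 := psi0 (vadd E x y) - psi0 x - psi0 y) in *.
      assert (Hg0 := Rabs_pos_lt g0 H0).
      exists (vadd E x y :: x :: y :: nil), (Rabs g0 / 3). split. lra.
      intros psi Hpsi.
      assert (h1 := Hpsi (vadd E x y) ltac:(simpl; auto)).
      assert (h2 := Hpsi x ltac:(simpl; auto)).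
      assert (h3 := Hpsi y ltac:(simpl; auto)).
      unfold g0 in *. clear Hpsi.
      revert h1 h2 h3 Hg0. unfold Rabs. repeat destruct (Rcase_abs _); intros; lra.
    + intro H0. apply Hne. lra.
    + apply Hp2. destruct (HS psi Hp1) as [Ha _]. rewrite Ha. ring.
  - intros c x. apply NNPP; intro Hne.
    destruct (HW (fun psi => psi (vscal E c x) - c * psi x <> 0)) as [psi [Hp1 Hp2]].
    + intros psi0 H0. set (g0 := psi0 (vscal E c x) - c * psi0 x) in *.
      assert (Hg0 := Rabs_pos_lt g0 H0).
      assert (HA := Rabs_pos c).
      set (eps := Rabs g0 / (2 + Rabs c)).
      assert (Heps : eps * (2 + Rabs c) = Rabs g0) by (unfold eps; field; lra).
      assert (Heps0 : eps > 0) by (unfold eps; apply Rdiv_lt_0_compat; lra).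
      exists (vscal E c x :: x :: nil), eps. split. exact Heps0.
      intros psi Hpsi.
      assert (h1 := Hpsi (vscal E c x) ltac:(simpl; auto)).
      assert (h2 := Hpsi x ltac:(simpl; auto)).
      assert (h3 : Rabs (c * (psi x - psi0 x)) <= Rabs c * eps).
      { rewrite Rabs_mult. apply Rmult_le_compat_l. exact HA. lra. }
      intro Hz.
      assert (Rabs g0 <= Rabs (psi (vscal E c x) - psi0 (vscal E c x)) + Rabs (c * (psi x - psi0 x))).
      { replace g0 with (- (psi (vscal E c x) - psi0 (vscal E c x)) + c * (psi x - psi0 x)) by (unfold g0; lra).
        eapply Rle_trans. apply Rabs_triang. rewrite Rabs_Ropp. lra. }
      nra.
    + intro H0. apply Hne. lra.
    + apply Hp2. destruct (HS psi Hp1) as [_ Hs]. rewrite Hs. ring.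
Qed.

Lemma comb_cons (E : Frechet) p (l : list (R * (E -> R))) x :
  comb (p :: l) x = fst p * snd p x + comb l x.
Proof. reflexivity. Qed.

Lemma comb_lin (E : Frechet) (l : list (R * (E -> R))) :
  (forall p, In p l -> is_linear (snd p)) -> is_linear (comb l).
Proof.
  induction l as [|p l IH]; intro H.
  - split; intros; unfold comb; simpl; ring.
  - destruct (H p (in_eq _ _)) as [Ha Hs].
    destruct IH as [IHa IHs]. intros q Hq. apply H. right. exact Hq.
    split.
    + intros x y. rewrite !comb_cons, Ha, IHa. ring.
    + intros c x. rewrite !comb_cons, Hs, IHs. ring.
Qed.

Lemma comb_abs (E : Frechet) (l : list (R * (E -> R))) z C :
  (forall p, In p l -> 0 <= fst p /\ Rabs (snd p z) <= C) ->
  Rabs (comb l z) <= C * fold_right (fun p acc => fst p + acc) 0 l.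
Proof.
  induction l as [|p l IH]; intro H.
  - unfold comb; simpl. rewrite Rabs_R0. lra.
  - rewrite comb_cons. simpl.
    destruct (H p (in_eq _ _)) as [H1 H2].
    assert (IH' := IH (fun q Hq => H q (or_intror Hq))).
    eapply Rle_trans. apply Rabs_triang. rewrite Rabs_mult, (Rabs_pos_eq (fst p) H1).
    assert (fst p * Rabs (snd p z) <= fst p * C) by (apply Rmult_le_compat_l; assumption).
    lra.
Qed.

Lemma cont_from_bound (E : Frechet) (phi : E -> R) n d C :
  is_linear phi -> d > 0 -> C >= 0 -> (forall z, sball0 E n d z -> Rabs (phi z) <= C) ->
  is_continuous_functional phi.
Proof.
  intros Hl Hd HC Hb x eps He.
  set (c := 2 * (C + 1) / eps).
  assert (Hc : c > 0) by (unfold c; apply Rdiv_lt_0_compat; lra).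
  exists n, (d / c). split. apply Rdiv_lt_0_compat; lra.
  intros y Hy.
  assert (Hz : Rabs (phi (vscal E c (vsub y x))) <= C).
  { apply Hb. intros k Hk. rewrite snorm_homog, Rabs_pos_eq by lra.
    specialize (Hy k Hk).
    apply Rmult_lt_compat_l with (r := c) in Hy; [|lra].
    replace (c * (d / c)) with d in Hy by (field; lra). exact Hy. }
  destruct Hl as [Ha Hs]. rewrite Hs, (lin_sub E phi x y (conj Ha Hs)), Rabs_mult, (Rabs_pos_eq c) in Hz by lra.
  apply Rnot_le_lt; intro Hge.
  assert (eps * c <= Rabs (phi y - phi x) * c) by (apply Rmult_le_compat_r; lra).
  assert (eps * c = 2 * (C + 1)) by (unfold c; field; lra).
  nra.
Qed.

Fixpoint Sn (E : Frechet) (n : nat) (x : E) : R :=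
  match n with O => snorm E 0 x | S n' => Sn E n' x + snorm E (S n') x end.

Lemma Sn_ge (E : Frechet) n x : 0 <= Sn E n x /\ forall k, (k <= n)%nat -> snorm E k x <= Sn E n x.
Proof.
  induction n as [|n [IH1 IH2]]; simpl.
  - split. apply snorm_nonneg. intros k Hk. assert (k = 0%nat) by lia. subst. lra.
  - assert (h := snorm_nonneg E (S n) x). split. lra.
    intros k Hk. destruct (Nat.eq_dec k (S n)) as [->|Hne]. lra.
    assert (IH2' := IH2 k ltac:(lia)). lra.
Qed.

Lemma bound_all (E : Frechet) (phi : E -> R) n d C :
  is_linear phi -> d > 0 -> C >= 0 -> (forall z, sball0 E n d z -> Rabs (phi z) <= C) ->
  forall x, Rabs (phi x) <= 2 * C * (Sn E n x + 1) / d.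
Proof.
  intros Hl Hd HC Hb x.
  destruct (Sn_ge E n x) as [HS1 HS2].
  set (lam := d / (2 * (Sn E n x + 1))).
  assert (Hlam : lam > 0) by (unfold lam; apply Rdiv_lt_0_compat; lra).
  assert (Hz : Rabs (phi (vscal E lam x)) <= C).
  { apply Hb. intros k Hk. rewrite snorm_homog, Rabs_pos_eq by lra.
    assert (h := HS2 k Hk).
    assert (lam * snorm E k x <= lam * Sn E n x) by (apply Rmult_le_compat_l; lra).
    assert (lam * (Sn E n x + 1) = d / 2) by (unfold lam; field; lra).
    lra. }
  destruct Hl as [_ Hs]. rewrite Hs, Rabs_mult, (Rabs_pos_eq lam) in Hz by lra.
  apply Rmult_le_reg_r with lam. exact Hlam.
  replace (2 * C * (Sn E n x + 1) / d * lam) with C by (unfold lam; field; lra).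
  lra.
Qed.

Lemma core (E : Frechet) a b f : a <= b -> wstar_continuous_on E a b f ->
  exists c : E -> R,
    (forall phi, closed_convex_hull (image_interval f a b) phi -> forall x, Rabs (phi x) <= c x) /\
    (forall phi, W (closed_convex_hull (image_interval f a b)) phi ->
        closed_convex_hull (image_interval f a b) phi).
Proof.
  intros Hab Hc.
  destruct (ball_bound E a b f Hab Hc) as [C [n [d [Hd [HC Hbd]]]]].
  set (hull := convex_hull (image_interval f a b)).
  assert (Hhl : forall psi, hull psi -> is_linear psi).
  { intros psi [l [Hl [_ ->]]]. apply comb_lin. intros p Hp.
    destruct (Hl p Hp) as [_ [t [Ht ->]]]. exact (proj1 (proj1 Hc t Ht)). }
  assert (Hhb : forall z, sball0 E n d z -> forall psi, hull psi -> Rabs (psi z) <= C).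
  { intros z Hz psi [l [Hl [Hsum ->]]]. eapply Rle_trans.
    - apply (comb_abs E l z C). intros p Hp. destruct (Hl p Hp) as [H0 [t [Ht ->]]].
      split. exact H0. apply Hbd; assumption.
    - rewrite Hsum. lra. }
  assert (HK : forall phi, W hull phi -> in_dual phi /\ (forall z, sball0 E n d z -> Rabs (phi z) <= C)).
  { intros phi HW.
    assert (Hlin := W_lin E hull phi Hhl HW).
    assert (Hb : forall z, sball0 E n d z -> Rabs (phi z) <= C)
      by (intros z Hz; exact (W_abs E hull z C phi (Hhb z Hz) HW)).
    split. split. exact Hlin. exact (cont_from_bound E phi n d C Hlin Hd HC Hb). exact Hb. }
  exists (fun x => 2 * C * (Sn E n x + 1) / d). split.
  - intros phi [Hdual HW] x. apply (bound_all E phi n d C (proj1 Hdual) Hd HC).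
    exact (proj2 (HK phi HW)).
  - intros phi HW.
    assert (HW' : W hull phi).
    { intros U HU HUp. destruct (HW U HU HUp) as [psi [[_ Hpsi] HUpsi]]. exact (Hpsi U HU HUpsi). }
    split. exact (proj1 (HK phi HW')). exact HW'.
Qed.

From HB Require Import structures.
From mathcomp Require Import all_boot all_order all_algebra finmap.
From mathcomp Require Import all_classical all_reals all_analysis.
From mathcomp Require Import Rstruct Rstruct_topology.
From Stdlib Require Import Lra.
Import Order.TTheory GRing.Theory Num.Theory.
Local Open Scope classical_set_scope.

HB.instance Definition _ (E : Type) := isPointed.Build (prod_topology (fun _ : {classic E} => R)) (fun _ => 0%R).

Local Notation PT E := (prod_topology (fun _ : {classic E} => R)).

Lemma basic_nbhs (E : Frechet) (phi : PT E) (xs : list E) (eps : R) : (0 < eps)%R ->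
  nbhs phi [set psi : PT E | forall x, In x xs -> Rabs (psi x - phi x) < eps].
Proof.
move=> e0; elim: xs => [|x xs IH].
  apply: filterS (@filterT _ _ (@nbhs_filter (PT E) phi)) => psi _ x [].
have h := @proj_continuous {classic E} (fun _ => R) x phi.
have hb : nbhs (phi x) [set r : R | Rabs (r - phi x) < eps].
  apply/nbhs_ballP; exists eps => //= r.
  rewrite /ball /= => /RltP hr; rewrite -Rabs_Ropp; replace (- (r - phi x)) with (phi x + - r) by ring; exact: hr.
have := h _ hb.
move=> h2; apply: filterS (filterI IH h2) => psi [H1 H2] y [<-|iy]; last exact: H1.
exact: H2.
Qed.


Lemma in_seq_In (I : Type) (i : {classic I}) (s : seq {classic I}) :
  i \in s -> In i s.
Proof.
elim: s => [//|j s IH]; rewrite in_cons => /orP [/eqP ->|/IH h]; [left|right] => //.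
Qed.

Lemma bridge (E : Frechet) (K : (E -> R) -> Prop) (c : E -> R) :
  (forall phi, K phi -> forall x, Rabs (phi x) <= c x) ->
  (forall phi, (forall U : (E -> R) -> Prop, Defs.wopen U -> U phi -> exists psi, K psi /\ U psi) -> K phi) ->
  forall (I : Type) (U : I -> (E -> R) -> Prop), (forall i, Defs.wopen (U i)) ->
    (forall phi, K phi -> exists i, U i phi) ->
    exists l : list I, forall phi, K phi -> exists i, In i l /\ U i phi.
Proof.
move=> hb hcl I U hU hcov.
have wo : forall V, Defs.wopen V -> open (V : set (PT E)).
  move=> V hV; rewrite openE => phi /hV [xs [eps [e0 H]]].
  rewrite /interior; apply: filterS (@basic_nbhs E phi xs eps _); first exact: H.
  by apply/RltP; apply: Rgt_lt.
have Kc : compact (K : set (PT E)).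
  apply: (@subclosed_compact (PT E) _ [set f : PT E | forall i, `[Ropp (c i), c i]%classic (f i)]).
  2: exact (@tychonoff {classic E} (fun _ => R) (fun x => `[Ropp (c x), c x]%classic) (fun x => @segment_compact R (Ropp (c x)) (c x))).
  - move=> phi clphi; apply: (hcl phi) => V hV Vphi.
    have := clphi V (open_nbhs_nbhs (conj (wo V hV) Vphi)).
    by case=> psi [Kpsi Vpsi]; exists psi.
  - move=> phi Kphi x; rewrite /= in_itv /=; have := hb phi Kphi x => h.
    have h1 := Rle_abs (phi x); have h2 := Rle_abs (- phi x); rewrite Rabs_Ropp in h2.
    apply/andP; split; apply/RleP; lra.
have Kc2 : cover_compact (K : set (PT E)) by rewrite -compact_cover.
have := Kc2 {classic I} setT U (fun i _ => wo _ (hU i)).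
case.
  by move=> phi /hcov [i Ui]; exists i.
move=> D' _ cov; exists D' => phi /cov [i Di Ui]; exists i; split => //.
exact: in_seq_In.
Qed.


Open Scope R_scope.

Theorem proposition4 (E : Frechet) (a b : R) (f : R -> E -> R) :
  a <= b ->
  wstar_continuous_on E a b f ->
  wstar_compact (closed_convex_hull (image_interval f a b)).
Proof.
  intros Hab Hc. destruct (core E a b f Hab Hc) as [c [Hb Hcl]]. split.
  - intros phi [H _]; exact H.
  - intros I U HU Hcov. exact (bridge E _ c Hb Hcl I U HU Hcov).
Qed.
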